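(* Let $R$ be a commutative ring with identity and $M$ a non-zero comultiplication $R$-module. If $G'(M)$ is non-null and connected, then $\mathrm{diam}(G'(M))\le 2$.
   Context: An $R$-module $M$ is a comultiplication module if for every submodule $N$ of $M$ there is an ideal $I$ of $R$ with $N=\mathrm{Ann}_M(I)$. A submodule $N$ of $M$ is large if $N\cap L\neq 0$ for every non-zero submodule $L$ of $M$. The large sum graph $G'(M)$ has as vertex set the set of all non-zero non-large submodules of $M$, and two distinct vertices $N,K$ are adjacent iff $N+K$ is non-large in $M$. The diameter is the supremum of the distances between pairs of vertices. *)

(* Defs.v *)
From HB Require Import structures.
From mathcomp Require Import all_boot all_order all_algebra.
Set Implicit Arguments. Unset Strict Implicit. Unset Printing Implicit Defensive.
Import GRing.Theory.
Local Open Scope ring_scope.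

Section ModuleDefs.
Variables (R : comPzRingType) (M : lmodType R).

Definition is_submodule (N : M -> Prop) : Prop :=
  [/\ N 0,
      (forall x y, N x -> N y -> N (x + y)) &
      (forall (r : R) x, N x -> N (r *: x))].

Definition is_ideal (I : R -> Prop) : Prop :=
  [/\ I 0,
      (forall a b, I a -> I b -> I (a + b)) &
      (forall r a, I a -> I (r * a))].

Definition annM (I : R -> Prop) : M -> Prop :=
  fun m => forall r, I r -> r *: m = 0.

Definition same_sub (N K : M -> Prop) : Prop := forall m, N m <-> K m.

Definition comultiplication_module : Prop :=
  forall N, is_submodule N -> exists I, is_ideal I /\ same_sub N (annM I).

Definition nonzero_module : Prop := exists m : M, m <> 0.

Definition nonzero_sub (N : M -> Prop) : Prop := exists m, N m /\ m <> 0.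

Definition large (N : M -> Prop) : Prop :=
  forall L, is_submodule L -> nonzero_sub L -> exists m, N m /\ L m /\ m <> 0.

Definition sum_sub (N K : M -> Prop) : M -> Prop :=
  fun m => exists a b, N a /\ K b /\ m = a + b.

Definition lsg_vertex (N : M -> Prop) : Prop :=
  [/\ is_submodule N, nonzero_sub N & ~ large N].

Definition lsg_adj (N K : M -> Prop) : Prop :=
  ~ same_sub N K /\ ~ large (sum_sub N K).

Fixpoint lsg_walk_le (n : nat) (N K : M -> Prop) : Prop :=
  match n with
  | O => same_sub N K
  | S n' => lsg_walk_le n' N K \/
            exists L, lsg_vertex L /\ lsg_adj N L /\ lsg_walk_le n' L K
  end.

Definition lsg_non_null : Prop := exists N, lsg_vertex N.

Definition lsg_connected : Prop :=
  forall N K, lsg_vertex N -> lsg_vertex K -> exists n, lsg_walk_le n N K.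

Definition lsg_diam_le (d : nat) : Prop :=
  forall N K, lsg_vertex N -> lsg_vertex K -> lsg_walk_le d N K.

End ModuleDefs.

(* Main.v *)
Require Import Defs.
From mathcomp Require Import all_boot all_order all_algebra.
From Stdlib Require Import Classical.
Import GRing.Theory.
Local Open Scope ring_scope.
Set Implicit Arguments. Unset Strict Implicit.

Section Proof.
Variables (R : comPzRingType) (M : lmodType R).
Implicit Types (N K X Y Z L W A B : M -> Prop).

Lemma subN N x : is_submodule N -> N x -> N (- x).
Proof. case=> _ _ hs hx; rewrite -scaleN1r; exact: hs. Qed.

Lemma subD N x y : is_submodule N -> N x -> N y -> N (x + y).
Proof. by case=> _ ha _; apply: ha. Qed.

Lemma subB N x y : is_submodule N -> N x -> N y -> N (x - y).
Proof. move=> hN hx hy; apply: subD => //; exact: subN. Qed.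

Lemma sub0 N : is_submodule N -> N 0.
Proof. by case. Qed.

Lemma subZ N r x : is_submodule N -> N x -> N (r *: x).
Proof. by case=> _ _ hs; apply: hs. Qed.

Lemma large_mono A B : large A -> (forall m, A m -> B m) -> large B.
Proof.
move=> hA hAB L hL hnz; case: (hA L hL hnz) => m [h1 [h2 h3]].
by exists m; split=> //; apply: hAB.
Qed.

Lemma nlarge_sub A B : ~ large B -> (forall m, A m -> B m) -> ~ large A.
Proof. by move=> hB hAB hA; apply: hB; apply: large_mono hA hAB. Qed.

Lemma inter_sub N K : is_submodule N -> is_submodule K ->
  is_submodule (fun m => N m /\ K m).
Proof.
move=> hN hK; split.
- by split; apply: sub0.
- by move=> x y [? ?] [? ?]; split; apply: subD.
- by move=> r x [? ?]; split; apply: subZ.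
Qed.

Lemma cyc_sub (x : M) : is_submodule (fun m => exists r : R, m = r *: x).
Proof.
split.
- by exists 0; rewrite scale0r.
- by move=> a b [r ->] [s ->]; exists (r + s); rewrite scalerDl.
- by move=> r a [s ->]; exists (r * s); rewrite scalerA.
Qed.

Hypothesis comult : comultiplication_module M.

Lemma decomp N K x n k : is_submodule N -> is_submodule K ->
  (forall m, N m -> K m -> m = 0) -> N n -> K k -> x = n + k ->
  exists r : R, n = r *: x.
Proof.
move=> hN hK hNK hn hk hx.
case: (comult (cyc_sub x)) => I [_ hI].
have hxI : annM I x by apply/hI; exists 1; rewrite scale1r.
have : annM I n.
  move=> i hi; have := hxI i hi; rewrite hx scalerDr => e.
  apply: hNK; first exact: subZ.
  have -> : i *: n = - (i *: k) by apply/eqP; rewrite -addr_eq0; apply/eqP.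
  by apply: subN => //; apply: subZ.
by move/hI.
Qed.

Lemma decomp_in N K X x n k : is_submodule N -> is_submodule K ->
  is_submodule X ->
  (forall m, N m -> K m -> m = 0) -> N n -> K k -> x = n + k -> X x ->
  X n /\ X k.
Proof.
move=> hN hK hX hNK hn hk hx hXx.
case: (decomp hN hK hNK hn hk hx) => r hr.
have hXn : X n by rewrite hr; apply: subZ.
split=> //; have -> : k = x - n by rewrite hx addrC addKr.
exact: subB.
Qed.

Lemma key N K X W : is_submodule N -> is_submodule K -> is_submodule X ->
  (forall m, N m -> K m -> m = 0) -> (forall m, W m -> K m) ->
  large (sum_sub X K) -> large (sum_sub N W) -> large (sum_sub X W).
Proof.
move=> hN hK hX hNK hWK hXK hNW Z hZ hZnz.
case: (hNW Z hZ hZnz) => m [[n [w [hn [hw hm]]]] [hZm hm0]].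
case: (decomp_in hN hK hZ hNK hn (hWK _ hw) hm hZm) => hZn hZw.
have [w0|wn0] := eqVneq w 0.
- have nn0 : n != 0 by apply: contra_notN hm0; move/eqP => n0; rewrite hm n0 w0 addr0.
  have hRn : nonzero_sub (fun m => exists r : R, m = r *: n).
    by exists n; split; [exists 1; rewrite scale1r | apply/eqP].
  case: (hXK _ (cyc_sub n) hRn) => u [[x [k [hx [hk hu]]]] [[s hs] hu0]].
  have hNu : N u by rewrite hs; apply: subZ.
  have hx' : x = u + - k by rewrite hu addrK.
  have hNx : N x \/ True by right.
  case: (decomp_in hN hK hX hNK hNu (subN hK hk) hx' hx) => hXu _.
  exists u; split; first by exists u, 0; split=> //; split; [rewrite w0 in hw|rewrite addr0].
  by split=> //; rewrite hs; apply: subZ.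
- exists w; split; first by exists 0, w; split; [apply: sub0|split=> //; rewrite add0r].
  by split=> //; apply/eqP.
Qed.

Lemma meet_split N K Y : is_submodule N -> is_submodule K -> is_submodule Y ->
  (forall m, N m -> K m -> m = 0) -> large (sum_sub N K) -> nonzero_sub Y ->
  nonzero_sub (fun m => Y m /\ N m) \/ nonzero_sub (fun m => Y m /\ K m).
Proof.
move=> hN hK hY hNK hl hnz.
case: (hl Y hY hnz) => y [[n [k [hn [hk hy]]]] [hYy hy0]].
case: (decomp_in hN hK hY hNK hn hk hy hYy) => hYn hYk.
have [n0|nn0] := eqVneq n 0.
- by right; exists k; split=> //; move=> k0; apply: hy0; rewrite hy n0 k0 addr0.
- by left; exists n; split=> //; apply/eqP.
Qed.

Lemma cross K : lsg_vertex K -> forall n A, is_submodule A ->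
  lsg_walk_le n A K -> large (sum_sub A K) ->
  exists X Y, [/\ is_submodule X, large (sum_sub X K), lsg_vertex Y,
     ~ large (sum_sub X Y) & ~ large (sum_sub Y K)].
Proof.
move=> [hK _ hKl]; elim=> [|n IH] A hA /=.
- move=> hs hl; exfalso; apply: hKl; apply: (large_mono hl) => m [a [b [ha [hb ->]]]].
  by apply: subD => //; apply/hs.
- case=> [hw|[L [hL [[_ hAL] hw]]]] hl; first exact: IH hA hw hl.
  case: (classic (large (sum_sub L K))) => hLK.
  + by apply: IH hLK; [case: hL|].
  + by exists A, L.
Qed.

Lemma walk2 N K L : lsg_vertex L -> lsg_vertex K -> lsg_adj N L -> lsg_adj L K ->
  lsg_walk_le 2 N K.
Proof.
move=> hL hK hNL hLK; right; exists L; split=> //; split=> //.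
by right; exists K; split=> //; split=> //.
Qed.

Lemma sum_self N m : is_submodule N -> sum_sub N N m -> N m.
Proof. by move=> hN [a [b [ha [hb ->]]]]; apply: subD. Qed.

Lemma main N K : lsg_vertex N -> lsg_vertex K -> (exists n, lsg_walk_le n N K) ->
  lsg_walk_le 2 N K.
Proof.
move=> hVN hVK [n hw].
have [hN hNnz hNl] := hVN; have [hK hKnz hKl] := hVK.
case: (classic (same_sub N K)) => hs; first by left; left.
case: (classic (large (sum_sub N K))) => hl; last first.
  by right; exists K; split=> //; split=> //; left.
case: (classic (exists m, N m /\ K m /\ m <> 0)) => hi.
-
  pose L := fun m => N m /\ K m.
  have hLs : is_submodule L by apply: inter_sub.
  apply: (@walk2 _ _ L).
  + split=> //; first by case: hi => m [? [? ?]]; exists m.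
    by apply: (nlarge_sub hNl) => m [].
  + by [].
  + split.
    * move=> hNL; apply: hKl; apply: (large_mono hl) => m [a [b [ha [hb ->]]]].
      by apply: subD => //; have /hNL [] := ha.
    * by apply: (nlarge_sub hNl) => m [a [b [ha [[hb _] ->]]]]; apply: subD.
  + split.
    * move=> hLK; apply: hNl; apply: (large_mono hl) => m [a [b [ha [hb ->]]]].
      by apply: subD => //; have /hLK [] := hb.
    * by apply: (nlarge_sub hKl) => m [a [b [[_ ha] [hb ->]]]]; apply: subD.
- have hNK : forall m, N m -> K m -> m = 0.
    move=> m h1 h2; case: (classic (m = 0)) => // h; exfalso.
    by apply: hi; exists m.
  case: (cross hVK hN hw hl) => X [Y [hX hXK hVY hXY hYK]].
  have [hY hYnz hYl] := hVY.
  case: (meet_split hN hK hY hNK hl hYnz) => hYN.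
  + pose L := fun m => Y m /\ N m.
    have hLs : is_submodule L by apply: inter_sub.
    apply: (@walk2 _ _ L) => //.
    * by split=> //; apply: (nlarge_sub hNl) => m [].
    * split.
      - move=> hNL; apply: hYK; apply: (large_mono hl) => m [a [b [ha [hb ->]]]].
        by exists a, b; split=> //; have /hNL [] := ha.
      - by apply: (nlarge_sub hNl) => m [a [b [ha [[_ hb] ->]]]]; apply: subD.
    * split.
      - move=> hLK; case: hYN => m [[hm1 hm2] hm0]; apply: hm0; apply: hNK => //.
        by have /hLK := conj hm1 hm2.
      - by apply: (nlarge_sub hYK) => m [a [b [[ha _] [hb ->]]]]; exists a, b.
  + pose L := fun m => Y m /\ K m.
    have hLs : is_submodule L by apply: inter_sub.
    apply: (@walk2 _ _ L) => //.
    * by split=> //; apply: (nlarge_sub hKl) => m [].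
    * split.
      - move=> hNL; case: hYN => m [[hm1 hm2] hm0]; apply: hm0; apply: hNK => //.
        by have /hNL := conj hm1 hm2.
      - move=> hNL; apply: hXY.
        have := key hN hK hX hNK (W := L) (fun m (h : L m) => h.2) hXK hNL.
        move=> h; apply: (large_mono h) => m [a [b [ha [[hb _] ->]]]].
        by exists a, b.
    * split.
      - move=> hLK; apply: hXY; apply: (large_mono hXK) => m [a [b [ha [hb ->]]]].
        by exists a, b; split=> //; have /hLK [] := hb.
      - by apply: (nlarge_sub hKl) => m [a [b [[_ ha] [hb ->]]]]; apply: subD.
Qed.

End Proof.

Theorem theorem2p7 (R : comPzRingType) (M : lmodType R) :
  nonzero_module M -> comultiplication_module M ->
  lsg_non_null M -> lsg_connected M -> lsg_diam_le M 2.
Proof.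
move=> _ hc _ hconn N K hN hK.
exact: (main hc hN hK (hconn N K hN hK)).
Qed.
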